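(* Let $D$ be a Dedekind domain with field of fractions $K$ and let $A$ be a $D$-algebra with standard assumptions. Let $P$ be a nonzero prime ideal of $D$. Then the following are equivalent: (1) $N_{D/P}(A/PA)\neq (0)$; (2) $D_P[X]\subsetneq \textnormal{Int}_K(A_P)$; (3) $D/P$ is finite and $A/PA$ is an algebraic $D/P$-algebra of bounded degree.
   Context: A $D$-algebra $A$ satisfies the standard assumptions if it is torsion-free as a $D$-module and $A\cap K = D$ inside $K\otimes_D A$; polynomials in $K[X]$ are evaluated in $K\otimes_D A$. $A_P=(D\setminus P)^{-1}A$ and $\textnormal{Int}_K(A_P)=\{f\in K[X]\mid f(A_P)\subseteq A_P\}$. For a commutative ring $R$ and $R$-algebra $C$, $N_R(C)=\{f\in R[X]\mid f(c)=0\ \forall c\in C\}$. An algebra over a field $F$ is algebraic of bounded degree if there is $n$ such that every element satisfies a nonzero polynomial over $F$ of degree at most $n$. *)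

(* Defs.v *)
From HB Require Import structures.
From mathcomp Require Import all_boot all_order all_algebra.
From mathcomp Require Import fraction.
Set Implicit Arguments. Unset Strict Implicit. Unset Printing Implicit Defensive.
Import Order.TTheory GRing.Theory Num.Theory.
Local Open Scope ring_scope.
Local Notation "x %:F" := (@tofrac _ x).


Section Ideals.
Variable D : idomainType.

Definition is_ideal (I : D -> Prop) : Prop :=
  [/\ I 0, (forall x y, I x -> I y -> I (x + y)) & (forall r x, I x -> I (r * x))].

Definition is_prime_ideal (P : D -> Prop) : Prop :=
  [/\ is_ideal P, ~ P 1 & (forall a b, P (a * b) -> P a \/ P b)].

Definition nonzero_ideal (I : D -> Prop) : Prop := exists x, I x /\ x <> 0.

Definition noetherian_dom : Prop :=
  forall I, is_ideal I -> exists s : seq D,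
    (forall x, x \in s -> I x) /\
    (forall x, I x -> exists c : seq D, size c = size s /\
                     x = \sum_(i < size s) c`_i * s`_i).

Definition integrally_closed_dom : Prop :=
  forall x : {fraction D},
    (exists p : {poly D}, p \is monic /\ root (map_poly (@tofrac D) p) x) ->
    exists d : D, x = d%:F.

Definition dim_le1 : Prop :=
  forall P, is_prime_ideal P -> nonzero_ideal P ->
  forall I, is_ideal I -> ~ I 1 -> (forall x, P x -> I x) -> forall x, I x -> P x.

Definition dedekind_domain : Prop :=
  [/\ noetherian_dom, integrally_closed_dom & dim_le1].
End Ideals.

Section Algebra.
Variable D : idomainType.
Local Notation K := {fraction D}.
Variable B : algType K.

Definition evalK (f : {poly K}) (b : B) : B := (map_poly (in_alg B) f).[b].
Definition evalD (f : {poly D}) (b : B) : B := evalK (map_poly (@tofrac D) f) b.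

(* A is (the image of) a D-algebra A inside B such that B = K (x)_D A:
   A is a unital subring of B, stable under the D-action, and every
   element of B is of the form d^-1 a (d in D nonzero, a in A).  With
   this, A is torsion-free and B is canonically K (x)_D A.  The last
   condition is the standard assumption A ∩ K = D. *)
Definition standard_assumptions (A : B -> Prop) : Prop :=
  [/\ A 1 /\ (forall x y, A x -> A y -> A (x - y)),
      (forall x y, A x -> A y -> A (x * y)),
      (forall (d : D) x, A x -> A (d%:F *: x)),
      (forall b : B, exists d : D, exists2 a, A a & d != 0 /\ b = (d%:F)^-1 *: a)
    & (forall k : K, A (k%:A) -> exists d : D, k = d%:F)].

Definition locD (P : D -> Prop) (k : K) : Prop :=
  exists d s : D, ~ P s /\ k = d%:F / s%:F.

Definition locA (P : D -> Prop) (A : B -> Prop) (b : B) : Prop :=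
  exists a s, [/\ A a, ~ P s & b = (s%:F)^-1 *: a].

Definition IntK (P : D -> Prop) (A : B -> Prop) (f : {poly K}) : Prop :=
  forall b, locA P A b -> locA P A (evalK f b).

Definition polyOverLoc (P : D -> Prop) (f : {poly K}) : Prop :=
  forall i, locD P f`_i.

Definition PA (P : D -> Prop) (A : B -> Prop) (b : B) : Prop :=
  exists s : seq (D * B), (forall x, x \in s -> P x.1 /\ A x.2) /\
    b = \sum_(x <- s) (x.1)%:F *: x.2.

Definition nonzero_mod (P : D -> Prop) (f : {poly D}) : Prop :=
  exists i, ~ P f`_i.

Definition N_nonzero (P : D -> Prop) (A : B -> Prop) : Prop :=
  exists f : {poly D}, nonzero_mod P f /\
    forall a, A a -> PA P A (evalD f a).

Definition finite_quotient (P : D -> Prop) : Prop :=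
  exists s : seq D, forall d, exists2 x, x \in s & P (d - x).

Definition bounded_degree_mod (P : D -> Prop) (A : B -> Prop) : Prop :=
  exists n : nat, forall a, A a -> exists f : {poly D},
    [/\ nonzero_mod P f, (size f <= n.+1)%N & PA P A (evalD f a)].
End Algebra.

(* Main.v *)
Require Import Defs.
From HB Require Import structures.
From mathcomp Require Import all_boot all_order all_algebra.
From mathcomp Require Import fraction.
From mathcomp Require Import ring zify.
From Stdlib Require Import Classical ClassicalEpsilon.
Set Implicit Arguments. Unset Strict Implicit. Unset Printing Implicit Defensive.
Import GRing.Theory.
Local Open Scope ring_scope.
Local Notation "x %:F" := (@tofrac _ x).

Lemma min_nat (Q : nat -> Prop) : (exists n, Q n) -> exists n, Q n /\ forall m, (m < n)%N -> ~ Q m.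
Proof.
move=> [n hn]; elim: n {-2}n (leqnn n) hn => [|N IH] n hle hn.
  by exists n; split => // m; move: hle; rewrite leqn0 => /eqP ->.
case: (classic (exists m, (m < n)%N /\ Q m)) => [[m [hm qm]]|h].
  by apply: (IH m) => //; rewrite -ltnS; exact: leq_trans hm hle.
by exists n; split => // m hm qm; apply: h; exists m.
Qed.

Section Max.
Variable D : idomainType.

Lemma ideal_sum (I : D -> Prop) (s c : seq D) : is_ideal I ->
  (forall x, x \in s -> I x) -> I (\sum_(i < size s) c`_i * s`_i).
Proof.
move=> [I0 ID IM] hs; apply: big_ind => // i _; apply: IM; apply: hs.
exact: mem_nth.
Qed.

Lemma max_principle : noetherian_dom D ->
  forall F : (D -> Prop) -> Prop, (forall I, F I -> is_ideal I) -> (exists I, F I) ->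
  exists M, F M /\ forall J, F J -> (forall x, M x -> J x) -> forall x, J x -> M x.
Proof.
move=> HN F FI [I0 FI0]; apply: NNPP => hn.
have step : forall S : {I | F I}, {T : {I | F I} | exists x, proj1_sig T x /\ ~ proj1_sig S x /\
     forall y, proj1_sig S y -> proj1_sig T y}.
  move=> [M FM]; apply: constructive_indefinite_description.
  apply: NNPP => h2; apply: hn; exists M; split => // J FJ sub x Jx.
  apply: NNPP => nM; apply: h2; exists (exist _ J FJ); by exists x.
pose g S := proj1_sig (step S).
pose c := fix c n := if n is n'.+1 then g (c n') else exist _ I0 FI0.
have mono : forall n m, (n <= m)%N -> forall y, proj1_sig (c n) y -> proj1_sig (c m) y.
  move=> n m /subnK <-; elim: (m - n)%N => [|k IH] y hy; first by rewrite add0n.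
  rewrite addSn /=; case: (proj2_sig (step (c (k + n)%N))) => x [_ [_ H]].
  by apply: H; apply: IH.
pose U y := exists n, proj1_sig (c n) y.
have UI : is_ideal U.
  split.
  - by exists 0%N; case: (FI _ (proj2_sig (c 0%N))).
  - move=> x y [n hn1] [m hm1]; exists (maxn n m).
    case: (FI _ (proj2_sig (c (maxn n m)))) => _ H _; apply: H.
      by apply: (mono n) => //; apply: leq_maxl.
    by apply: (mono m) => //; apply: leq_maxr.
  - move=> r x [n hn1]; exists n; case: (FI _ (proj2_sig (c n))) => _ _ H; exact: H.
have [s [hs gen]] := HN U UI.
have [N HNs] : exists N, forall x, x \in s -> proj1_sig (c N) x.
  elim: s hs {gen} => [|y s IH] hs; first by exists 0%N.
  have [N1 H1] : exists N, forall x, x \in s -> proj1_sig (c N) x.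
    by apply: IH => x hx; apply: hs; rewrite inE hx orbT.
  have [N2 H2] := hs y (mem_head _ _).
  exists (maxn N1 N2) => x; rewrite inE => /orP [/eqP ->|hx].
    by apply: (mono N2) => //; apply: leq_maxr.
  by apply: (mono N1); [apply: leq_maxl|apply: H1].
case: (proj2_sig (step (c N))) => x [hx [hnx _]].
have Ux : U x by exists N.+1.
apply: hnx; have [cs [_ ->]] := gen x Ux.
apply: ideal_sum => //; first exact: (FI _ (proj2_sig (c N))).
Qed.
End Max.

Section Loc.
Variable D : idomainType.
Local Notation K := {fraction D}.
Variable P : D -> Prop.
Hypothesis Pp : is_prime_ideal P.
Hypothesis dim1 : dim_le1 D.
Hypothesis Pnz : nonzero_ideal P.

Lemma P0 : P 0. Proof. by case: Pp => [[]]. Qed.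
Lemma PD x y : P x -> P y -> P (x + y). Proof. by case: Pp => [[_ H _]] _ _; apply: H. Qed.
Lemma PMl r x : P x -> P (r * x). Proof. by case: Pp => [[_ _ H]] _ _; apply: H. Qed.
Lemma PMr r x : P x -> P (x * r). Proof. by rewrite mulrC; apply: PMl. Qed.
Lemma PN x : P x -> P (- x). Proof. by move=> h; rewrite -mulN1r; apply: PMl. Qed.
Lemma PB x y : P x -> P y -> P (x - y). Proof. by move=> hx hy; apply: PD => //; apply: PN. Qed.
Lemma notP1 : ~ P 1. Proof. by case: Pp. Qed.
Lemma Pprime a b : P (a * b) -> P a \/ P b. Proof. by case: Pp => _ _; apply. Qed.
Lemma notPM s t : ~ P s -> ~ P t -> ~ P (s * t).
Proof. by move=> hs ht /Pprime []. Qed.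
Lemma notPX s n : ~ P s -> ~ P (s ^+ n).
Proof. move=> hs; elim: n => [|n IH]; first by rewrite expr0; exact: notP1.
by rewrite exprS; apply: notPM. Qed.
Lemma notP_neq0 s : ~ P s -> s != 0.
Proof. by move=> hs; apply/eqP => e; apply: hs; rewrite e; exact: P0. Qed.
Lemma notP_F s : ~ P s -> s%:F != 0.
Proof. by move=> hs; rewrite tofrac_eq0; apply: notP_neq0. Qed.
Lemma PsumD (I : Type) (r : seq I) (F : I -> D) :
  (forall i, P (F i)) -> P (\sum_(i <- r) F i).
Proof. move=> h; elim: r => [|x r IH]; rewrite ?big_nil ?big_cons; [exact: P0|exact: PD]. Qed.

Lemma inv_mod t : ~ P t -> exists t' p, P p /\ 1 = p + t * t'.
Proof.
move=> ht; apply: NNPP => hn.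
pose I y := exists p r, P p /\ y = p + t * r.
have II : is_ideal I.
  split; first by exists 0, 0; rewrite mulr0 addr0; split => //; exact: P0.
  - move=> x y [p [r [hp ->]]] [p' [r' [hp' ->]]]; exists (p + p'), (r + r').
    by split; [apply: PD|rewrite mulrDr addrACA].
  - move=> c x [p [r [hp ->]]]; exists (c * p), (c * r); split; first exact: PMl.
    by rewrite mulrDr mulrCA.
have I1 : ~ I 1 by move=> [p [r [hp e]]]; apply: hn; exists r, p.
have := dim1 Pp Pnz II I1.
have PI : forall x, P x -> I x by move=> x hx; exists x, 0; rewrite mulr0 addr0.
move=> /(_ PI t) H; apply: ht; apply: H.
by exists 0, 1; rewrite mulr1 add0r; split => //; exact: P0.
Qed.

Definition inD (k : K) := exists d : D, k = d%:F.

Lemma locD_D d : locD P d%:F.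
Proof. by exists d, 1; rewrite tofrac1 divr1; split => //; exact: notP1. Qed.
Lemma locD0 : locD P 0. Proof. by rewrite -tofrac0; exact: locD_D. Qed.
Lemma locD1 : locD P 1. Proof. by rewrite -tofrac1; exact: locD_D. Qed.
Lemma locDM x y : locD P x -> locD P y -> locD P (x * y).
Proof.
move=> [a [s [hs ->]]] [b [t [ht ->]]]; exists (a * b), (s * t); split; first exact: notPM.
by rewrite !tofracM invfM mulrACA.
Qed.
Lemma locDD x y : locD P x -> locD P y -> locD P (x + y).
Proof.
move=> [a [s [hs ->]]] [b [t [ht ->]]]; exists (a * t + b * s), (s * t); split; first exact: notPM.
have hs' := notP_F hs; have ht' := notP_F ht.
by rewrite addf_div // tofracD !tofracM.
Qed.
Lemma locDN x : locD P x -> locD P (- x).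
Proof. move=> [a [s [hs ->]]]; exists (- a), s; split => //; by rewrite tofracN mulNr. Qed.
Lemma locDB x y : locD P x -> locD P y -> locD P (x - y).
Proof. by move=> hx hy; apply: locDD => //; apply: locDN. Qed.
Lemma locD_inv s : ~ P s -> locD P (s%:F)^-1.
Proof. by move=> hs; exists 1, s; rewrite tofrac1 div1r. Qed.
Lemma locD_sum (I : Type) (r : seq I) (F : I -> K) :
  (forall i, locD P (F i)) -> locD P (\sum_(i <- r) F i).
Proof. move=> h; elim: r => [|x r IH]; rewrite ?big_nil ?big_cons; [exact: locD0|exact: locDD]. Qed.

Lemma locDE x : locD P x <-> exists s, ~ P s /\ inD (s%:F * x).
Proof.
split.
  move=> [a [s [hs ->]]]; exists s; split => //; exists a.
  by rewrite mulrC -mulrA mulVf ?mulr1 //; apply: notP_F.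
move=> [s [hs [d e]]]; exists d, s; split => //; rewrite -e mulrC mulrA mulVf ?mul1r //.
exact: notP_F.
Qed.

Lemma common_den (l : seq K) : (forall x, x \in l -> locD P x) ->
  exists T, ~ P T /\ forall x, x \in l -> inD (T%:F * x).
Proof.
elim: l => [|y l IH] h.
  by exists 1; split => //; exact: notP1.
have [T [hT HT]] : exists T, ~ P T /\ forall x, x \in l -> inD (T%:F * x).
  by apply: IH => x hx; apply: h; rewrite inE hx orbT.
have /locDE [s [hs [d hd]]] := h y (mem_head _ _).
exists (T * s); split; first exact: notPM.
move=> x; rewrite inE => /orP [/eqP ->|hx].
  by exists (T * d); rewrite tofracM -mulrA hd tofracM.
have [e he] := HT x hx; exists (e * s).
by rewrite tofracM mulrAC he tofracM.
Qed.

Lemma common_den_fin (I : finType) (F : I -> K) : (forall i, locD P (F i)) ->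
  exists T, ~ P T /\ forall i, inD (T%:F * F i).
Proof.
move=> h; have [T [hT HT]] := @common_den [seq F i | i <- enum I] (fun x hx =>
  match (mapP hx) with ex_intro2 i _ e => eq_ind_r _ (h i) e end).
by exists T; split => // i; apply: HT; apply: map_f; rewrite mem_enum.
Qed.




Lemma P_ideal : is_ideal P. Proof. by case: Pp. Qed.

Lemma exists_q : noetherian_dom D ->
  exists q : K, ~ locD P q /\ forall p, P p -> locD P (q * p%:F).
Proof.
move=> HN; have [a [Pa a0]] := Pnz.
have aF : a%:F != 0 by rewrite tofrac_eq0; apply/eqP.
pose F (I : D -> Prop) := exists b : D, ~ locD P (b%:F / a%:F) /\
   forall y, I y <-> locD P (y%:F * b%:F / a%:F).
have FI : forall I, F I -> is_ideal I.
  move=> I [b [_ hb]]; split.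
  - by apply/hb; rewrite tofrac0 !mul0r; exact: locD0.
  - move=> x y /hb hx /hb hy; apply/hb; rewrite tofracD !mulrDl; exact: locDD.
  - move=> r x /hb hx; apply/hb; rewrite tofracM.
    have -> : r%:F * x%:F * b%:F / a%:F = r%:F * (x%:F * b%:F / a%:F) by rewrite !mulrA.
    by apply: locDM => //; exact: locD_D.
have F1 : exists I, F I.
  exists (fun y => locD P (y%:F * 1%:F / a%:F)), 1; split => //.
  move=> /locDE [s [hs [d hd]]]; apply: hs.
  have : s = d * a.
    apply/eqP; rewrite -tofrac_eq tofracM -hd tofrac1 mul1r -mulrA mulVf ?mulr1 //.
  by move=> ->; apply: PMl.
have [Q [[b [nb hb]] Qmax]] := @max_principle D HN _ FI F1.
have QP : forall y, Q y -> P y.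
  move=> y /hb hy; apply: NNPP => ny; apply: nb.
  have := locDM (locD_inv ny) hy.
  have yF := notP_F ny.
  by rewrite -!mulrA (mulrA _ y%:F) mulVf // mul1r.
have Qprime : is_prime_ideal Q.
  split; first by apply: FI; exists b.
  - by move=> /hb; rewrite tofrac1 mul1r.
  - move=> x y Qxy; case: (classic (Q x)) => Qx; [by left|right].
    pose J z := locD P (z%:F * (x * b)%:F / a%:F).
    have FJ : F J.
      exists (x * b); split => //.
      by move=> h; apply: Qx; apply/hb; move: h; rewrite tofracM.
    apply: (Qmax J FJ).
      move=> z /hb hz; rewrite /J tofracM.
      have -> : z%:F * (x%:F * b%:F) / a%:F = x%:F * (z%:F * b%:F / a%:F) by rewrite !mulrA (mulrC z%:F).
      by apply: locDM => //; exact: locD_D.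
    move: Qxy => /hb; rewrite /J !tofracM.
    by rewrite (mulrC x%:F) !mulrA.
have Qnz : nonzero_ideal Q.
  exists a; split; last exact: a0.
  apply/hb; have -> : a%:F * b%:F / a%:F = b%:F by rewrite mulrC mulrA mulVf // mul1r.
  exact: locD_D.
have PQ := dim1 Qprime Qnz P_ideal notP1 QP.
exists (b%:F / a%:F); split => // p hp.
have := hb p; case=> /(_ (PQ p hp)) h _.
by rewrite mulrC mulrA.
Qed.


Lemma choice_fun (I X : Type) (R : I -> X -> Prop) :
  (forall i, exists x, R i x) -> exists f : I -> X, forall i, R i (f i).
Proof.
move=> h; exists (fun i => proj1_sig (constructive_indefinite_description _ (h i))).
by move=> i; case: (constructive_indefinite_description _ (h i)).
Qed.

Lemma unit_claim : noetherian_dom D -> integrally_closed_dom D ->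
  exists p, P p /\ exists u t, [/\ ~ P u, ~ P t &
    (exists q, ~ locD P q /\ (forall p', P p' -> locD P (q * p'%:F)) /\ q * p%:F = u%:F / t%:F)].
Proof.
move=> HN HIC; have [q [nq hq]] := exists_q HN.
apply: NNPP => H.
have H' : forall p, P p -> locD P (q * p%:F) -> exists d t, [/\ P d, ~ P t & q * p%:F = d%:F / t%:F].
  move=> p hp [d [t [ht e]]]; exists d, t; split => //.
  apply: NNPP => nd; apply: H; exists p; split => //; exists d, t; split => //.
  by exists q.
have [s [hs gen]] := HN P P_ideal.
pose m := size s.
have hi : forall i : 'I_m, exists pr : seq D * D, ~ P pr.2 /\
    q * (s`_i)%:F = (\sum_(j < m) pr.1`_j * s`_j)%:F / (pr.2)%:F.
  move=> i; have Psi : P s`_i by apply: hs; apply: mem_nth.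
  have [d [t [Pd nt e]]] := H' _ Psi (hq _ Psi).
  have [c [_ ed]] := gen d Pd.
  by exists (c, t); split => //=; rewrite e ed.
have [fc hfc] := choice_fun hi.
pose k (ij : 'I_m * 'I_m) := ((fc ij.1).1`_ij.2)%:F / ((fc ij.1).2)%:F.
have [T [nT hT]] := common_den_fin (F := k) (fun ij => locDM (locD_D _) (locD_inv (proj1 (hfc ij.1)))).
have [e he] := choice_fun (fun ij => hT ij).
pose G0 : 'M[D]_m := \matrix_(i, j) e (j, i).
pose w : 'rV[{fraction D}]_m := \row_j (s`_j)%:F.
have Hw : w *m map_mx (@tofrac D) G0 = (T%:F * q) *: w.
  apply/rowP => j; rewrite !mxE.
  have [_ ej] := hfc j.
  rewrite -mulrA ej rmorph_sum /= mulr_suml mulr_sumr.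
  apply: eq_bigr => i _; rewrite !mxE -he /k /= tofracM; ring.
have w0 : w != 0.
  apply/eqP => w0; have [a [Pa a0]] := Pnz; apply: a0.
  have [c [_ ->]] := gen a Pa; apply: big1 => i _.
  have : w 0 i = 0 by rewrite w0 mxE.
  rewrite mxE => /eqP; rewrite tofrac_eq0 => /eqP ->; exact: mulr0.
have : eigenvalue (map_mx (@tofrac D) G0) (T%:F * q) by apply/eigenvalueP; exists w.
rewrite eigenvalue_root_char -map_char_poly => hr.
have [d hd] := HIC (T%:F * q) (ex_intro _ _ (conj (char_poly_monic G0) hr)).
apply: nq; exists d, T; split => //.
rewrite -hd mulrC mulrA mulVf ?mul1r //; exact: notP_F.
Qed.


Lemma exists_pi : noetherian_dom D -> integrally_closed_dom D ->
  exists pi, [/\ P pi, pi != 0, ~ locD P (pi%:F)^-1 &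
    forall p, P p -> locD P (p%:F / pi%:F)].
Proof.
move=> HN HIC; have [p [Pp' [u [t [nu nt [q [nq [hq e]]]]]]]] := unit_claim HN HIC.
have uF := notP_F nu; have tF := notP_F nt.
have qp0 : q * p%:F != 0 by rewrite e mulf_neq0 // invr_eq0.
have q0 : q != 0 by apply: contraNneq qp0 => ->; rewrite mul0r.
have p0 : p%:F != 0 by apply: contraNneq qp0 => ->; rewrite mulr0.
have tu : t%:F / u%:F = (q * p%:F)^-1 by rewrite e invf_div.
exists p; split => //.
- by move: p0; rewrite tofrac_eq0.
- move=> h; apply: nq.
  have -> : q = (u%:F / t%:F) * (p%:F)^-1 by rewrite -e -mulrA mulfV // mulr1.
  apply: locDM => //; apply: locDM; [exact: locD_D|exact: locD_inv].
- move=> p' hp'.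
  have -> : p'%:F / p%:F = (q * p'%:F) * (t%:F / u%:F).
    by rewrite tu invfM mulrACA mulfV // mul1r.
  apply: locDM; [exact: hq|]; apply: locDM; [exact: locD_D|exact: locD_inv].
Qed.


Lemma val_lemma : noetherian_dom D -> forall pi, P pi -> pi != 0 -> ~ locD P (pi%:F)^-1 ->
  (forall p, P p -> locD P (p%:F / pi%:F)) ->
  forall d : D, d != 0 -> exists n, locD P (pi%:F ^+ n / d%:F).
Proof.
move=> HN pi Ppi pi0 npi hpi d d0.
have dF : d%:F != 0 by rewrite tofrac_eq0.
have piF : pi%:F != 0 by rewrite tofrac_eq0.
pose F (I : D -> Prop) := exists k, locD P (d%:F / pi%:F ^+ k) /\
   forall y, I y <-> locD P (y%:F * pi%:F ^+ k / d%:F).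
have FI : forall I, F I -> is_ideal I.
  move=> I [k [_ hb]]; split.
  - by apply/hb; rewrite tofrac0 !mul0r; exact: locD0.
  - move=> x y /hb hx /hb hy; apply/hb; rewrite tofracD !mulrDl; exact: locDD.
  - move=> r x /hb hx; apply/hb; rewrite tofracM.
    have -> : r%:F * x%:F * pi%:F ^+ k / d%:F = r%:F * (x%:F * pi%:F ^+ k / d%:F) by rewrite !mulrA.
    by apply: locDM => //; exact: locD_D.
have F1 : exists I, F I.
  exists (fun y => locD P (y%:F * pi%:F ^+ 0 / d%:F)), 0%N; split => //.
  by rewrite expr0 divr1; exact: locD_D.
have [M [[k [hk hM]] Mmax]] := @max_principle D HN _ FI F1.
have pkF : forall j, pi%:F ^+ j != 0 by move=> j; rewrite expf_neq0.
have nk1 : ~ locD P (d%:F / pi%:F ^+ k.+1).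
  move=> hk1.
  pose J y := locD P (y%:F * pi%:F ^+ k.+1 / d%:F).
  have FJ : F J by exists k.+1.
  have MJ : forall y, M y -> J y.
    move=> y /hM hy; rewrite /J exprS.
    have -> : y%:F * (pi%:F * pi%:F ^+ k) / d%:F = pi%:F * (y%:F * pi%:F ^+ k / d%:F) by ring.
    by apply: locDM => //; exact: locD_D.
  have [y [s [ns e]]] := hk1.
  have sF := notP_F ns.
  have ey : y%:F = s%:F * (d%:F / pi%:F ^+ k.+1) by rewrite e mulrCA mulfV // mulr1.
  have ys : y%:F * pi%:F ^+ k.+1 / d%:F = s%:F by rewrite ey -(mulrA s%:F) divfK // mulfK.
  have Jy : J y by rewrite /J ys; exact: locD_D.
  have /hM My := Mmax J FJ MJ y Jy.
  have ys2 : y%:F * pi%:F ^+ k / d%:F = s%:F / pi%:F.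
    rewrite -ys exprS.
    have -> : y%:F * (pi%:F * pi%:F ^+ k) / d%:F = (y%:F * pi%:F ^+ k / d%:F) * pi%:F by ring.
    by rewrite mulfK.
  apply: npi; have := locDM (locD_inv ns) My; rewrite ys2 mulrA mulVf // mul1r //.
have [y [s [ns e]]] := hk.
have sF := notP_F ns.
have ny : ~ P y.
  move=> Py; apply: nk1; rewrite exprS invfM mulrA (mulrC d%:F) -mulrA e.
  have -> : pi%:F^-1 * (y%:F / s%:F) = (y%:F / pi%:F) * (s%:F)^-1 by ring.
  by apply: locDM; [exact: hpi|exact: locD_inv].
exists k; have -> : pi%:F ^+ k / d%:F = s%:F / y%:F by rewrite -invf_div e invf_div.
by apply: locDM; [exact: locD_D|exact: locD_inv].
Qed.

Variable B : algType K.
Variable A : B -> Prop.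
Hypothesis SA : standard_assumptions A.

Lemma A1 : A 1. Proof. by case: SA => [[]]. Qed.
Lemma AB x y : A x -> A y -> A (x - y). Proof. by case: SA => [[_ H]] *; apply: H. Qed.
Lemma A0 : A 0. Proof. by rewrite -(subrr 1); apply: AB; apply: A1. Qed.
Lemma AN x : A x -> A (- x). Proof. by move=> h; rewrite -sub0r; apply: AB => //; apply: A0. Qed.
Lemma AD x y : A x -> A y -> A (x + y). Proof. by move=> hx hy; rewrite -[y]opprK; apply: AB => //; apply: AN. Qed.
Lemma AM x y : A x -> A y -> A (x * y). Proof. by case: SA => _ H *; apply: H. Qed.
Lemma AZ (d : D) x : A x -> A (d%:F *: x). Proof. by case: SA => _ _ H *; apply: H. Qed.
Lemma AX x n : A x -> A (x ^+ n).
Proof. move=> h; elim: n => [|n IH]; [rewrite expr0; exact: A1| rewrite exprS; exact: AM]. Qed.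
Lemma Asum (I : Type) (r : seq I) (F : I -> B) : (forall i, A (F i)) -> A (\sum_(i <- r) F i).
Proof. move=> h; elim: r => [|x r IH]; rewrite ?big_nil ?big_cons; [exact: A0|exact: AD]. Qed.
Lemma AK (k : K) : A k%:A -> exists d : D, k = d%:F. Proof. by case: SA => _ _ _ _; apply. Qed.
Lemma Adec (b : B) : exists d : D, exists2 a, A a & d != 0 /\ b = (d%:F)^-1 *: a.
Proof. by case: SA => _ _ _ H _; apply: H. Qed.

Lemma size_map_le (R S : nzRingType) (g : R -> S) (p : {poly R}) : (size (map_poly g p) <= size p)%N.
Proof. exact: size_poly. Qed.

Lemma evalK_wide (f : {poly K}) (b : B) n : (size f <= n)%N ->
  evalK f b = \sum_(i < n) f`_i *: b ^+ i.
Proof.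
move=> hn; rewrite /evalK (@horner_coef_wide _ n); last exact: leq_trans (size_map_le _ _) hn.
by apply: eq_bigr => i _; rewrite coef_map /= mulr_algl.
Qed.

Lemma evalK_sum (f : {poly K}) (b : B) : evalK f b = \sum_(i < size f) f`_i *: b ^+ i.
Proof. exact: evalK_wide. Qed.

Lemma evalD_sum (f : {poly D}) (b : B) : evalD f b = \sum_(i < size f) (f`_i)%:F *: b ^+ i.
Proof.
rewrite /evalD (@evalK_wide _ _ (size f)); last exact: size_map_le.
by apply: eq_bigr => i _; rewrite coef_map.
Qed.



Lemma evalKE (f : {poly K}) (b : B) : evalK f b = horner_alg b f. Proof. by []. Qed.
Lemma evalKM (f g : {poly K}) (b : B) : evalK (f * g) b = evalK f b * evalK g b.
Proof. by rewrite !evalKE rmorphM. Qed.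
Lemma evalKZ k (f : {poly K}) (b : B) : evalK (k *: f) b = k *: evalK f b.
Proof. by rewrite /evalK map_polyZ /= hornerZ mulr_algl. Qed.
Lemma evalDM (f g : {poly D}) (b : B) : evalD (f * g) b = evalD f b * evalD g b.
Proof. by rewrite /evalD rmorphM evalKM. Qed.
Lemma evalDB (f g : {poly D}) (b : B) : evalD (f - g) b = evalD f b - evalD g b.
Proof. by rewrite /evalD !evalKE !raddfB. Qed.
Lemma evalD_prod (r : seq {poly D}) (b : B) :
  evalD (\prod_(h <- r) h) b = \prod_(h <- r) evalD h b.
Proof.
elim: r => [|h r IH]; rewrite ?big_nil ?big_cons.
  by rewrite /evalD rmorph1 evalKE rmorph1.
by rewrite evalDM IH.
Qed.

Lemma A_evalD (f : {poly D}) a : A a -> A (evalD f a).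
Proof. by move=> ha; rewrite evalD_sum; apply: Asum => i; apply: AZ; apply: AX. Qed.

Lemma locA_A a : A a -> locA P A a.
Proof. by move=> ha; exists a, 1; rewrite tofrac1 invr1 scale1r; split => //; exact: notP1. Qed.
Lemma locA0 : locA P A 0. Proof. exact: locA_A A0. Qed.
Lemma locA1 : locA P A 1. Proof. exact: locA_A A1. Qed.
Lemma locAM x y : locA P A x -> locA P A y -> locA P A (x * y).
Proof.
move=> [a [s [ha hs ->]]] [b [t [hb ht ->]]]; exists (a * b), (s * t); split.
- exact: AM.
- exact: notPM.
- by rewrite -scalerAl -scalerAr scalerA tofracM invfM.
Qed.
Lemma locAD x y : locA P A x -> locA P A y -> locA P A (x + y).
Proof.
move=> [a [s [ha hs ->]]] [b [t [hb ht ->]]]; exists (t%:F *: a + s%:F *: b), (s * t); split.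
- by apply: AD; apply: AZ.
- exact: notPM.
have sF := notP_F hs; have tF := notP_F ht.
rewrite scalerDr !scalerA tofracM invfM.
congr (_ *: _ + _ *: _).
  by rewrite -mulrA mulVf // mulr1.
by rewrite mulrAC mulVf // mul1r.
Qed.
Lemma locAZ k x : locD P k -> locA P A x -> locA P A (k *: x).
Proof.
move=> [d [t [ht ->]]] [a [s [ha hs ->]]]; exists (d%:F *: a), (t * s); split.
- exact: AZ.
- exact: notPM.
by rewrite !scalerA tofracM invfM; congr (_ *: _); ring.
Qed.
Lemma locAN x : locA P A x -> locA P A (- x).
Proof. by move=> h; rewrite -scaleN1r; apply: locAZ => //; apply: locDN; apply: locD1. Qed.
Lemma locAB x y : locA P A x -> locA P A y -> locA P A (x - y).
Proof. by move=> hx hy; apply: locAD => //; apply: locAN. Qed.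
Lemma locAX x n : locA P A x -> locA P A (x ^+ n).
Proof. move=> h; elim: n => [|n IH]; [rewrite expr0; exact: locA1| rewrite exprS; exact: locAM]. Qed.
Lemma locAsum (I : Type) (r : seq I) (F : I -> B) : (forall i, locA P A (F i)) -> locA P A (\sum_(i <- r) F i).
Proof. move=> h; elim: r => [|x r IH]; rewrite ?big_nil ?big_cons; [exact: locA0|exact: locAD]. Qed.

Lemma locA_eval (f : {poly K}) b : polyOverLoc P f -> locA P A b -> locA P A (evalK f b).
Proof.
move=> hf hb; rewrite evalK_sum; apply: locAsum => i; apply: locAZ; first exact: hf.
exact: locAX.
Qed.

Lemma PA0 : PA P A 0. Proof. by exists [::]; rewrite big_nil. Qed.
Lemma PA_A x : PA P A x -> A x.
Proof. move=> [s [hs ->]]; rewrite big_seq; apply: big_ind => //; [exact: A0|exact: AD|].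
by move=> i /hs [_ h]; apply: AZ. Qed.
Lemma PAD x y : PA P A x -> PA P A y -> PA P A (x + y).
Proof.
move=> [s [hs ->]] [t [ht ->]]; exists (s ++ t); split; last by rewrite big_cat.
by move=> z; rewrite mem_cat => /orP []; [apply: hs|apply: ht].
Qed.
Lemma PAs p a : P p -> A a -> PA P A (p%:F *: a).
Proof. move=> hp ha; exists [:: (p, a)]; rewrite big_seq1; split => //.
by move=> z; rewrite inE => /eqP ->. Qed.
Lemma PAsum (I : Type) (r : seq I) (F : I -> B) : (forall i, PA P A (F i)) -> PA P A (\sum_(i <- r) F i).
Proof. move=> h; elim: r => [|x r IH]; rewrite ?big_nil ?big_cons; [exact: PA0|exact: PAD]. Qed.
Lemma PAZ (d : D) x : PA P A x -> PA P A (d%:F *: x).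
Proof.
move=> [s [hs ->]]; rewrite scaler_sumr big_seq; apply: big_ind => //; [exact: PA0|exact: PAD|].
move=> z /hs [hz1 hz2]; rewrite scalerA mulrC -scalerA; apply: PAs => //; exact: AZ.
Qed.
Lemma PAMl c x : A c -> PA P A x -> PA P A (c * x).
Proof.
move=> hc [s [hs ->]]; rewrite mulr_sumr big_seq; apply: big_ind => //; [exact: PA0|exact: PAD|].
by move=> z /hs [hz1 hz2]; rewrite -scalerAr; apply: PAs => //; exact: AM.
Qed.
Lemma PAMr c x : A c -> PA P A x -> PA P A (x * c).
Proof.
move=> hc [s [hs ->]]; rewrite mulr_suml big_seq; apply: big_ind => //; [exact: PA0|exact: PAD|].
by move=> z /hs [hz1 hz2]; rewrite -scalerAl; apply: PAs => //; exact: AM.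
Qed.
Lemma PAB x y : PA P A x -> PA P A y -> PA P A (x - y).
Proof.
move=> hx hy; apply: PAD => //; rewrite -scaleN1r -tofrac1 -tofracN; exact: PAZ.
Qed.
Lemma PAloc x t : A x -> ~ P t -> PA P A (t%:F *: x) -> PA P A x.
Proof.
move=> hx ht hp; have [t' [p [hp' e]]] := inv_mod ht.
have -> : x = p%:F *: x + t'%:F *: (t%:F *: x).
  by rewrite scalerA -tofracM -scalerDl -tofracD mulrC -e tofrac1 scale1r.
by apply: PAD; [exact: PAs|exact: PAZ].
Qed.
Lemma PA_poly (h : {poly D}) a : (forall i, P h`_i) -> A a -> PA P A (evalD h a).
Proof. by move=> hh ha; rewrite evalD_sum; apply: PAsum => i; apply: PAs => //; apply: AX. Qed.

Lemma N3 pi : P pi -> pi != 0 -> ~ locD P (pi%:F)^-1 ->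
  (forall p, P p -> locD P (p%:F / pi%:F)) ->
  forall e : D, PA P A (e%:F)%:A -> P e.
Proof.
move=> Ppi pi0 npi hpi e [s [hs ex]]; apply: NNPP => ne.
have piF : pi%:F != 0 by rewrite tofrac_eq0.
have [S [nS hS]] := @common_den [seq (z.1)%:F / pi%:F | z <- s] (fun x hx =>
  match (mapP hx) with ex_intro2 z hz e => eq_ind_r _ (hpi _ (proj1 (hs z hz))) e end).
have : A ((S%:F / pi%:F) *: (e%:F)%:A).
  rewrite ex scaler_sumr big_seq; apply: big_ind => //; [exact: A0|exact: AD|].
  move=> z hz; rewrite scalerA.
  have [d hd] := hS _ (map_f (fun z => (z.1)%:F / pi%:F) hz).
  have -> : S%:F / pi%:F * (z.1)%:F = S%:F * ((z.1)%:F / pi%:F) by ring.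
  rewrite hd; apply: AZ; exact: (proj2 (hs z hz)).
rewrite scalerA => /AK [d hd].
apply: (notPM nS ne).
have -> : S * e = pi * d.
  apply/eqP; rewrite -tofrac_eq !tofracM -hd; apply/eqP.
  by rewrite mulrA (mulrC pi%:F) divfK.
exact: PMr.
Qed.



Lemma max_idx (u : nat -> D) N : (forall k, (N <= k)%N -> P (u k)) -> (exists i, ~ P (u i)) ->
  exists i, ~ P (u i) /\ forall k, (i < k)%N -> P (u k).
Proof.
elim: N => [|N IH] hN hex.
  by case: hex => i hi; exfalso; apply: hi; apply: hN.
case: (classic (P (u N))) => hu; last by exists N.
apply: IH => // k; rewrite leq_eqVlt => /orP [/eqP <-|] //; exact: hN.
Qed.

Lemma nz_max (f : {poly D}) : nonzero_mod P f ->
  exists i, ~ P f`_i /\ forall k, (i < k)%N -> P f`_k.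
Proof.
move=> h; apply: (@max_idx (fun i => f`_i) (size f)) => // k hk.
by rewrite nth_default //; exact: P0.
Qed.

Lemma nonzero_mod_mul (f g : {poly D}) : nonzero_mod P f -> nonzero_mod P g -> nonzero_mod P (f * g).
Proof.
move=> /nz_max [i [hi Hi]] /nz_max [j [hj Hj]]; exists (i + j)%N; rewrite coefM.
have hio : (i < (i + j).+1)%N by rewrite ltnS leq_addr.
rewrite (bigD1 (Ordinal hio)) //= addKn => H.
have Hr : P (\sum_(k < (i + j).+1 | k != Ordinal hio) f`_k * g`_(i + j - k)).
  rewrite big_seq_cond; apply: big_ind => //; [exact: P0|exact: PD|].
  move=> k /andP [_ hk]; have : (k : nat) != i by [].
  rewrite neq_ltn => /orP [lt|gt]; last by apply: PMr; apply: Hi.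
  apply: PMl; apply: Hj; move: lt; clear; lia.
have := PB H Hr; rewrite addrK => /Pprime [] //.
Qed.

Lemma nonzero_mod_prod (r : seq {poly D}) : (forall h, h \in r -> nonzero_mod P h) ->
  nonzero_mod P (\prod_(h <- r) h).
Proof.
elim: r => [|h r IH] H; rewrite ?big_nil ?big_cons.
  by exists 0%N; rewrite coef1 eqxx; exact: notP1.
apply: nonzero_mod_mul; first by apply: H; exact: mem_head.
by apply: IH => x hx; apply: H; rewrite inE hx orbT.
Qed.

Lemma RC n (f : {poly D}) : (size f <= n)%N -> nonzero_mod P f ->
  forall S : seq D, (forall d, (exists2 x, x \in S & P (d - x)) \/ P f.[d]) ->
  finite_quotient P.
Proof.
elim: n f => [|n IH] f hs hnz S HS.
  move: hs; rewrite size_poly_leq0 => /eqP f0; case: hnz => i; rewrite f0 coef0.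
  by case; exact: P0.
case: (classic (forall d, exists2 x, x \in S & P (d - x))) => hc; first by exists S.
have [d0 hd0] : exists d0, ~ (exists2 x, x \in S & P (d0 - x)).
  by apply: NNPP => hn; apply: hc => d; apply: NNPP => hd; apply: hn; exists d.
have Pc : P f.[d0] by case: (HS d0).
set c := f.[d0] in Pc.
have : root (f - c%:P) d0 by rewrite rootE hornerD hornerN hornerC subrr.
case/factor_theorem => q eq.
have ef : f = q * ('X - d0%:P) + c%:P by rewrite -eq subrK.
have qnz : nonzero_mod P q.
  apply: NNPP => hq; case: hnz => i; apply.
  have Pq : forall k, P q`_k by move=> k; apply: NNPP => hk; apply: hq; exists k.
  rewrite ef coefD mulrBr coefB coefMX coefMC coefC.
  apply: PD; last by case: (i == 0)%N => //; exact: P0.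
  apply: PB; last by apply: PMr.
  by case: (i == 0)%N => //; exact: P0.
have q0 : q != 0 by apply/eqP => q0; case: qnz => i; rewrite q0 coef0; case; exact: P0.
apply: (IH q _ qnz (d0 :: S)).
  have : size (q * ('X - d0%:P)) = (size q).+1.
    by rewrite size_Mmonic ?monicXsubC // size_XsubC addn2.
  rewrite -eq => e2.
  have := size_polyD f (- c%:P); rewrite size_polyN e2 => h.
  have := size_polyC_leq1 c; have : (0 < size q)%N by rewrite size_poly_gt0.
  move: hs h; clear; move: (size f) (size q) (size c%:P) => a b e; lia.
move=> d; case: (HS d) => [[x hx hdx]|hf].
  by left; exists x => //; rewrite inE hx orbT.
have : P (q.[d] * (d - d0)).
  by move: (PB hf Pc); rewrite {1}ef hornerD hornerC hornerM hornerXsubC addrK.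
case/Pprime => h; [by right|left; exists d0 => //; exact: mem_head].
Qed.

Fixpoint Lseq (s : seq D) k : seq (seq D) :=
  if k is k'.+1 then [seq x :: t | x <- s, t <- Lseq s k'] else [:: [::]].

Lemma approx s : (forall d, exists2 x, x \in s & P (d - x)) ->
  forall k (u : nat -> D), exists h, [/\ h \in Lseq s k, size h = k &
     forall i, (i < k)%N -> P (u i - h`_i)].
Proof.
move=> hs; elim=> [|k IH] u; first by exists [::]; split => //; rewrite inE.
have [x hx hux] := hs (u 0%N).
have [t [ht st Ht]] := IH (fun i => u i.+1).
exists (x :: t); split => /=.
- exact: (allpairs_f (fun x t => x :: t) hx ht).
- by rewrite st.
- by case=> [|i] //= hi; apply: Ht.
Qed.


Variable pi : D.
Hypothesis Ppi : P pi.
Hypothesis pi0 : pi != 0.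
Hypothesis npi : ~ locD P (pi%:F)^-1.
Hypothesis hpi : forall p, P p -> locD P (p%:F / pi%:F).


Lemma piF : pi%:F != 0. Proof. by rewrite tofrac_eq0. Qed.

Lemma locA_PA x : PA P A x -> locA P A ((pi%:F)^-1 *: x).
Proof.
move=> [s [hs ->]]; rewrite scaler_sumr big_seq; apply: (big_ind (locA P A)).
- exact: locA0.
- exact: locAD.
move=> z /hs [hz1 hz2]; rewrite scalerA mulrC; apply: locAZ; first exact: hpi.
exact: locA_A.
Qed.

Lemma one_two (f : {poly D}) : nonzero_mod P f -> (forall a, A a -> PA P A (evalD f a)) ->
  exists g, IntK P A g /\ ~ polyOverLoc P g.
Proof.
move=> [i0 hi0] hf.
exists ((pi%:F)^-1 *: map_poly (@tofrac D) f); split; last first.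
  move=> /(_ i0); rewrite coefZ coef_map /= => h; apply: npi.
  have fF := notP_F hi0.
  have := locDM h (locD_inv hi0); rewrite -mulrA mulfV // mulr1 //.
move=> b [a [s [ha hs eb]]].
have [t' [p0 [Pp0 e1]]] := inv_mod hs.
set u := s * t'.
have sF := notP_F hs.
have hy : A (t'%:F *: a) by apply: AZ.
have ey : t'%:F *: a = u%:F *: b.
  by rewrite eb scalerA /u tofracM mulrAC mulfV // mul1r.
rewrite evalKZ.
pose w (i : nat) := \sum_(j < i) 1 ^+ (i.-1 - j) * u ^+ j.
have ew : forall i, 1 - u ^+ i = p0 * w i.
  move=> i; have := subrXX 1 u i; rewrite expr1n => ->.
  by rewrite /w /u {1}e1 addrK.
have E : evalD f b = evalD f (t'%:F *: a) +
    p0%:F *: \sum_(i < size f) ((f`_i * w i)%:F *: b ^+ i).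
  rewrite ey !evalD_sum scaler_sumr -big_split /=; apply: eq_bigr => i _.
  rewrite exprZn scalerA !scalerA -scalerDl; congr (_ *: _).
  rewrite -!tofracXn -!tofracM -tofracD; congr (_%:F).
  have := ew i; move=> e2.
  rewrite mulrCA -e2; ring.
rewrite /evalD in E; rewrite E scalerDr.
apply: locAD; first by apply: locA_PA; exact: (hf _ hy).
rewrite scalerA; apply: locAZ; first by rewrite mulrC; exact: hpi.
apply: locAsum => i; apply: locAZ; first exact: locD_D.
by apply: locAX; exists a, s.
Qed.


Lemma den_exists (k : K) : exists d : D, d != 0 /\ inD (d%:F * k).
Proof.
have [d [a ha [d0 e]]] := Adec (k%:A : B).
exists d; split => //; apply: AK.
have dF : d%:F != 0 by rewrite tofrac_eq0.
by rewrite -scalerA e scalerA mulfV // scale1r.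
Qed.

Lemma common_nz (l : seq K) : exists d : D, d != 0 /\ forall x, x \in l -> inD (d%:F * x).
Proof.
elim: l => [|y l [T [hT HT]]]; first by exists 1; split => //; exact: oner_neq0.
have [s [hs [d hd]]] := den_exists y.
exists (T * s); split; first by rewrite mulf_neq0.
move=> x; rewrite inE => /orP [/eqP ->|hx].
  by exists (T * d); rewrite tofracM -mulrA hd tofracM.
have [e he] := HT x hx; exists (e * s).
by rewrite tofracM mulrAC he tofracM.
Qed.

Hypothesis HN : noetherian_dom D.

Lemma two_one (g : {poly K}) : IntK P A g -> ~ polyOverLoc P g -> N_nonzero P A.
Proof.
move=> hg ng.
have [d [d0 hd]] := common_nz g.
have [n0 hn0] := val_lemma HN Ppi pi0 npi hpi d0.
have dF : d%:F != 0 by rewrite tofrac_eq0.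
pose Q n := forall i, locD P (pi%:F ^+ n * g`_i).
have Q0 : exists n, Q n.
  exists n0 => i; case: (ltnP i (size g)) => hi; last first.
    by rewrite nth_default // mulr0; exact: locD0.
  have [e he] := hd _ (mem_nth 0 hi).
  have -> : pi%:F ^+ n0 * g`_i = (pi%:F ^+ n0 / d%:F) * (d%:F * g`_i) by rewrite mulrA divfK.
  by rewrite he; apply: locDM => //; exact: locD_D.
have [n [Qn Qmin]] := min_nat Q0.
case: n Qn Qmin => [|n'] Qn Qmin.
  by exfalso; apply: ng => i; have := Qn i; rewrite expr0 mul1r.
have [i0 hi0] : exists i0, ~ locD P (pi%:F ^+ n' * g`_i0).
  apply: NNPP => h; apply: (Qmin n') => // i; apply: NNPP => hi; apply: h; by exists i.
have hi0s : (i0 < size g)%N.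
  rewrite ltnNge; apply/negP => hge; apply: hi0; rewrite nth_default // mulr0; exact: locD0.
have [s [ns hs]] := @common_den [seq pi%:F ^+ n'.+1 * x | x <- g] (fun x hx =>
  match (mapP hx) with ex_intro2 z hz e => eq_ind_r _ (Qn (index z g)) (etrans e (congr1 _ (esym (nth_index 0 hz)))) end).
have sF := notP_F ns.
have hfc : forall i : nat, exists x : D, x%:F = s%:F * (pi%:F ^+ n'.+1 * g`_i).
  move=> i; case: (ltnP i (size g)) => hi; last by exists 0; rewrite nth_default // !mulr0 tofrac0.
  have [x hx] := hs _ (map_f (fun x => pi%:F ^+ n'.+1 * x) (mem_nth 0 hi)).
  by exists x.
have [fc Hfc] := choice_fun hfc.
pose f : {poly D} := \poly_(i < size g) fc i.
have ef : map_poly (@tofrac D) f = (s%:F * pi%:F ^+ n'.+1) *: g.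
  apply/polyP => i; rewrite coef_map /= coef_poly coefZ.
  case: ltnP => hi; first by rewrite Hfc mulrA.
  by rewrite tofrac0 nth_default // mulr0.
exists f; split.
  exists i0 => Pf; apply: hi0.
  move: Pf; rewrite coef_poly hi0s => /hpi.
  rewrite Hfc => h; have := locDM h (locD_inv ns).
  have -> : s%:F * (pi%:F ^+ n'.+1 * g`_i0) / pi%:F / s%:F = pi%:F ^+ n' * g`_i0 => //.
  have pF := piF.
  rewrite [RHS](_ : _ = pi%:F ^+ n' * g`_i0 * (pi%:F / pi%:F) * (s%:F / s%:F)); last first.
    by rewrite !divff // !mulr1.
  rewrite exprS; ring.
move=> a ha.
have hfa : A (evalD f a) by apply: A_evalD.
have : locA P A (evalK g a) by apply: hg; exact: locA_A.
move=> [a' [t [ha' nt ea]]].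
apply: (PAloc hfa nt).
have tF := notP_F nt.
have -> : t%:F *: evalD f a = pi%:F *: ((s * pi ^+ n')%:F *: a').
  rewrite /evalD ef evalKZ ea !scalerA; congr (_ *: _).
  rewrite [RHS](_ : _ = pi%:F * (s * pi ^+ n')%:F * (t%:F / t%:F)); last first.
    by rewrite divff // mulr1.
  rewrite tofracM tofracXn exprS; ring.
apply: PAs => //; apply: AZ; exact: ha'.
Qed.

Lemma evalD_scal (f : {poly D}) (d : D) : evalD f ((d%:F)%:A : B) = ((f.[d])%:F)%:A.
Proof. by rewrite /evalD /evalK horner_map /= horner_map. Qed.

Lemma one_three : N_nonzero P A -> finite_quotient P /\ bounded_degree_mod P A.
Proof.
move=> [f [hnz hf]]; split; last first.
  by exists (size f) => a ha; exists f; split => //; exact: hf.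
apply: (@RC (size f) f (leqnn _) hnz [::]) => d; right.
apply: (N3 Ppi pi0 npi hpi); rewrite -evalD_scal; apply: hf.
exact: AZ A1.
Qed.

Lemma three_one : finite_quotient P /\ bounded_degree_mod P A -> N_nonzero P A.
Proof.
move=> [[s hs] [n hn]].
pose L := Lseq s n.+1.
pose nzb (h : seq D) : bool :=
  if excluded_middle_informative (nonzero_mod P (Poly h)) then true else false.
have nzbP : forall h, nzb h -> nonzero_mod P (Poly h).
  by move=> h; rewrite /nzb; case: excluded_middle_informative.
have nzbI : forall h, nonzero_mod P (Poly h) -> nzb h.
  by move=> h; rewrite /nzb; case: excluded_middle_informative.
exists (\prod_(h <- [seq Poly h | h <- filter nzb L]) h); split.
  apply: nonzero_mod_prod => x /mapP [h hh ->]; apply: nzbP.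
  by move: hh; rewrite mem_filter => /andP [].
move=> a ha; have [f [fnz fs fa]] := hn a ha.
have [h [hL hsz hP]] := approx hs n.+1 (fun i => f`_i).
have hPall : forall i, P (f - Poly h)`_i.
  move=> i; rewrite coefB coef_Poly; case: (ltnP i n.+1) => hi; first exact: hP.
  rewrite !nth_default ?subrr ?hsz //; first exact: P0.
  exact: leq_trans fs hi.
have hnz : nonzero_mod P (Poly h).
  case: fnz => i hi; exists i => Ph; apply: hi.
  have := PD (hPall i) Ph; by rewrite coefB subrK.
have hin : Poly h \in [seq Poly h | h <- filter nzb L].
  by apply: map_f; rewrite mem_filter nzbI.
have PAh : PA P A (evalD (Poly h) a).
  have -> : Poly h = f - (f - Poly h) by rewrite opprB addrC subrK.
  rewrite evalDB; apply: PAB => //; exact: PA_poly.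
rewrite evalD_prod.
elim: [seq Poly h | h <- filter nzb L] hin => [|x r IH] //.
rewrite inE big_cons => /orP [/eqP <-|hr].
  apply: PAMr => //; apply: big_ind => //; [exact: A1|exact: AM|].
  by move=> y _; apply: A_evalD.
by apply: PAMl; [exact: A_evalD|exact: IH].
Qed.

End Loc.

Theorem mainTheorem8 (D : idomainType) (B : algType {fraction D})
  (A : B -> Prop) (P : D -> Prop) :
  dedekind_domain D ->
  standard_assumptions A ->
  is_prime_ideal P -> nonzero_ideal P ->
  (N_nonzero P A <->
     ((forall f, polyOverLoc P f -> IntK P A f) /\
      (exists f, IntK P A f /\ ~ polyOverLoc P f))) /\
  ((forall f, polyOverLoc P f -> IntK P A f) /\
      (exists f, IntK P A f /\ ~ polyOverLoc P f) <->
     (finite_quotient P /\ bounded_degree_mod P A)).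
Proof.
move=> [HN HIC dim1] SA Pp Pnz.
have [pi [Ppi pi0 npi hpi]] := exists_pi Pp dim1 Pnz HN HIC.
have incl : forall f, polyOverLoc P f -> IntK P A f.
  by move=> f hf b hb; exact: (locA_eval Pp SA hf hb).
have h12 : N_nonzero P A -> (forall f, polyOverLoc P f -> IntK P A f) /\
      (exists f, IntK P A f /\ ~ polyOverLoc P f).
  move=> [f [hnz hf]]; split => //.
  exact: (one_two Pp dim1 Pnz SA npi hpi hnz hf).
have h21 : (forall f, polyOverLoc P f -> IntK P A f) /\
      (exists f, IntK P A f /\ ~ polyOverLoc P f) -> N_nonzero P A.
  move=> [_ [g [hg ng]]]; exact: (two_one Pp dim1 Pnz SA Ppi pi0 npi hpi HN hg ng).
split; split => [h|h].
- exact: h12.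
- exact: h21.
- exact: (one_three Pp SA Ppi pi0 npi hpi (h21 h)).
- exact: h12 (three_one Pp SA h).
Qed.
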